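(* Suppose Assumption 1 below holds and $F$ is concave and continuous (real-valued) on an open neighbourhood of $\lambda(\Theta)$. Let $\theta^*\in\Theta$ be a first-order stationary point of $\max_{\theta\in\Theta}F(\lambda(\theta))$, i.e. there exists $u^*\in\hat\partial(F\circ\lambda)(\theta^* )$ with $\langle u^*,\theta-\theta^*\rangle\le0$ for all $\theta\in\Theta$. Then $\theta^*$ is a globally optimal solution of $\max_{\theta\in\Theta}F(\lambda(\theta))$. Assumption 1: (i) $\lambda(\cdot)$ is a bijection between $\Theta$ and $\lambda(\Theta)$, and both $\Theta$ and $\lambda(\Theta)$ are closed and convex; (ii) $\lambda(\cdot)$ is differentiable on $\Theta$ with Lipschitz continuous Jacobian $\nabla_\theta\lambda(\theta)$; (iii) the inverse map $g:=\lambda^{-1}:\lambda(\Theta)\to\Theta$ satisfies $\|g(\lambda)-g(\lambda')\|\le\ell_\theta\,|\!|\!|\lambda-\lambda'|\!|\!|$ for all $\lambda,\lambda'\in\lambda(\Theta)$, for some $\ell_\theta>0$ and some norm $|\!|\!|\cdot|\!|\!|$ on $\mathbb{R}^{SA}$.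
   Context: Finite MDP with states $\mathcal S$ ($S=|\mathcal S|$), actions $\mathcal A$ ($A=|\mathcal A|$), transitions $P_a$, initial distribution $\xi$, discount $\gamma\in(0,1)$. Policies $\pi_\theta$, $\theta\in\Theta\subset\mathbb{R}^d$; $\lambda(\theta)\in\mathbb{R}^{SA}$ is the occupancy measure $\lambda(\theta)_{sa}=\sum_{t\ge0}\gamma^t\mathbb P(s_t=s,a_t=a\mid\pi_\theta,s_0\sim\xi)$. $\hat\partial h(\theta)$ denotes the Fréchet superdifferential of $h$ at $\theta$. $\|\cdot\|$ is the Euclidean norm. *)

(* Defs.v *)
From HB Require Import structures.
From mathcomp Require Import all_boot all_order all_algebra.
From mathcomp Require Import all_classical all_reals all_analysis.
Set Implicit Arguments. Unset Strict Implicit. Unset Printing Implicit Defensive.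
Import Order.TTheory GRing.Theory Num.Theory.
Import numFieldNormedType.Exports.
Local Open Scope classical_set_scope.
Local Open Scope ring_scope.

Section Defs.
Variable R : realType.

Definition dotv d (u v : 'rV[R]_d) : R := \sum_(j < d) u 0 j * v 0 j.
Definition enorm d (x : 'rV[R]_d) : R := Num.sqrt (dotv x x).

(** A (general) norm on R^{S x A}, represented as S x A matrices. *)
Definition is_norm nS nA (N : 'M[R]_(nS, nA) -> R) : Prop :=
  [/\ forall x, 0 <= N x,
      forall x, N x = 0 -> x = 0,
      forall (c : R) x, N (c *: x) = `|c| * N x
    & forall x y, N (x + y) <= N x + N y].

Definition convex_subset (V : lmodType R) (C : set V) : Prop :=
  forall x y (t : R), C x -> C y -> 0 <= t <= 1 -> C ((1 - t) *: x + t *: y).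

Definition concave_on (V : lmodType R) (U : set V) (F : V -> R) : Prop :=
  forall x y (t : R), U x -> U y -> 0 <= t <= 1 -> U ((1 - t) *: x + t *: y) ->
    (1 - t) * F x + t * F y <= F ((1 - t) *: x + t *: y).

Definition frechet_superdiff d (D : set 'rV[R]_d) (h : 'rV[R]_d -> R)
    (th0 u : 'rV[R]_d) : Prop :=
  forall eps : R, 0 < eps -> exists2 delta : R, 0 < delta &
    forall th, D th -> enorm (th - th0) < delta ->
      h th - h th0 - dotv u (th - th0) <= eps * enorm (th - th0).

Definition stochastic m n (M : 'M[R]_(m, n)) : Prop :=
  (forall i j, 0 <= M i j) /\ (forall i, \sum_(j < n) M i j = 1).

(** Finite MDP: states 'I_nS, actions 'I_nA, transitions P a s s',
    initial distribution xi, discount gamma; policy pi s a. *)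
Definition policy_transition nS nA (P : 'I_nA -> 'M[R]_nS) (pi : 'M[R]_(nS, nA))
  : 'M[R]_nS := \matrix_(s, s') \sum_(a < nA) pi s a * P a s s'.

(** State distribution at time t: P(s_t = s) = (xi P_pi^t) s. *)
Definition state_dist nS nA (P : 'I_nA -> 'M[R]_nS) (xi : 'rV[R]_nS)
  (pi : 'M[R]_(nS, nA)) (t : nat) : 'rV[R]_nS :=
  iter t (fun mu => mu *m policy_transition P pi) xi.

Definition occupancy nS nA (P : 'I_nA -> 'M[R]_nS) (xi : 'rV[R]_nS) (gamma : R)
  (pi : 'M[R]_(nS, nA)) : 'M[R]_(nS, nA) :=
  \matrix_(s, a)
    limn (fun n => \sum_(0 <= t < n) gamma ^+ t * (state_dist P xi pi t 0 s * pi s a)).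

Definition jacobian_col d (V : normedModType R) (f : 'rV[R]_d -> V)
  (th : 'rV[R]_d) (j : 'I_d) : V := 'd f th (delta_mx 0 j).

End Defs.

(* Main.v *)
Require Import Defs.
From HB Require Import structures.
From mathcomp Require Import all_boot all_order all_algebra.
From mathcomp Require Import all_classical all_reals all_analysis.
From mathcomp Require Import ring lra.
Import Order.TTheory GRing.Theory Num.Theory.
Import numFieldNormedType.Exports.
Local Open Scope classical_set_scope.
Local Open Scope ring_scope.

Theorem theorem3 (R : realType) (nS nA d : nat)
  (P : 'I_nA -> 'M[R]_nS) (xi : 'rV[R]_nS) (gamma : R)
  (pi : 'rV[R]_d -> 'M[R]_(nS, nA)) (Theta : set 'rV[R]_d)
  (F : 'M[R]_(nS, nA) -> R) (th_star : 'rV[R]_d) :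
  (forall a, stochastic (P a)) -> stochastic xi -> 0 < gamma < 1 ->
  (forall th, Theta th -> stochastic (pi th)) ->
  let lam := fun th => occupancy P xi gamma (pi th) in
  (* Assumption 1 (i) *)
  {in Theta &, injective lam} ->
  closed Theta -> convex_subset Theta ->
  closed (lam @` Theta) -> convex_subset (lam @` Theta) ->
  (* Assumption 1 (ii) *)
  (forall th, Theta th -> differentiable lam th) ->
  (exists L : R, forall th th', Theta th -> Theta th' -> forall j : 'I_d,
     `|jacobian_col lam th j - jacobian_col lam th' j| <= L * enorm (th - th')) ->
  (* Assumption 1 (iii) *)
  (exists g : 'M[R]_(nS, nA) -> 'rV[R]_d,
     (forall th, Theta th -> g (lam th) = th) /\
     exists (N : 'M[R]_(nS, nA) -> R) (ell : R), is_norm N /\ 0 < ell /\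
       forall x y, (lam @` Theta) x -> (lam @` Theta) y ->
         enorm (g x - g y) <= ell * N (x - y)) ->
  (* F concave and continuous on an open neighbourhood of lam(Theta) *)
  (exists U : set 'M[R]_(nS, nA), open U /\ lam @` Theta `<=` U /\
     {in U, continuous F} /\ concave_on U F) ->
  (* first-order stationarity of th_star *)
  Theta th_star ->
  (exists u : 'rV[R]_d, frechet_superdiff Theta (F \o lam) th_star u /\
     forall th, Theta th -> dotv u (th - th_star) <= 0) ->
  (* global optimality *)
  forall th, Theta th -> F (lam th) <= F (lam th_star).
Proof.
move=> _ _ _ _ lam _ _ _ _ convL _ _ [g [gK [N [ell [[N0 _ NZ _] [ell0 gL]]]]]]
  [U [_ [LU [_ concF]]]] Ths [u [sup uneg]] th Th.
rewrite leNgt; apply/negP => Hlt.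
set l1 := lam th; set l0 := lam th_star.
set D := F l1 - F l0.
have D0 : 0 < D by rewrite subr_gt0.
set C := ell * N (l1 - l0).
have C0 : 0 <= C by rewrite mulr_ge0 // ltW.
have C1 : 0 < C + 1 by lra.
set eps := D / (2 * (C + 1)).
have eps0 : 0 < eps by rewrite divr_gt0 // mulr_gt0.
have [delta delta0 Hd] := sup eps eps0.
set t := Num.min 1 (delta / (2 * (C + 1))).
have t0 : 0 < t by rewrite lt_min ltr01 divr_gt0 // mulr_gt0.
have t1 : t <= 1 by rewrite ge_min lexx.
have tle : t <= delta / (2 * (C + 1)) by rewrite ge_min lexx orbT.
have L0 : (lam @` Theta) l0 by exists th_star.
have L1 : (lam @` Theta) l1 by exists th.
have Lt := convL l0 l1 t L0 L1 _.
have tb : 0 <= t <= 1 by apply/andP; split => //; exact: ltW.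
have Lt' := Lt tb.
have Ct := concF l0 l1 t (LU _ L0) (LU _ L1) tb (LU _ Lt').
case: Lt' => tht Htht Etht.
have Ecomb : (1 - t) *: l0 + t *: l1 - l0 = t *: (l1 - l0).
  by apply/matrixP => i j; rewrite !mxE; ring.
have en0 : 0 <= enorm (tht - th_star) by exact: sqrtr_ge0.
have enC : enorm (tht - th_star) <= t * C.
  have := gL _ _ (ex_intro2 _ _ _ Htht Etht) L0.
  rewrite -Etht (gK _ Htht) (gK _ Ths) -/l0 Etht Ecomb NZ ger0_norm; last exact: ltW.
  by rewrite /C mulrCA mulrA.
have dt : delta / (2 * (C + 1)) * (2 * (C + 1)) = delta.
  by rewrite divfK // gt_eqF // mulr_gt0.
have de : eps * (2 * (C + 1)) = D.
  by rewrite divfK // gt_eqF // mulr_gt0.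
have enD : enorm (tht - th_star) < delta.
  apply: (le_lt_trans enC).
  have : t * C <= delta / (2 * (C + 1)) * C by rewrite ler_wpM2r.
  set q := delta / (2 * (C + 1)) in dt *; nra.
have H := Hd _ Htht enD.
have Hu := uneg _ Htht.
rewrite /= Etht in H.
have Hx : eps * enorm (tht - th_star) <= eps * (t * C) by rewrite ler_wpM2l // ltW.
have : t * D <= eps * (t * C) by rewrite /D; lra.
move=> Ht.
have : D <= eps * C.
  rewrite -(ler_pM2l t0); lra.
nra.
Qed.
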